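(* Let $T$ be a tree on at least three vertices and let $S \subseteq V(T)$. Then $S$ is a minimal fort of $T$ if and only if both of the following hold: (I) $S$ contains at least one leaf of $T$; and (II) for every leaf $\ell \in S$, every edge $\{a,b\}$ of $T$ with $a$ closer to $\ell$ than $b$ (possibly $a=\ell$, and possibly $b$ is a leaf) satisfies: (i) if $a, b \notin S$, then $N(b) \cap S = \emptyset$; (ii) if $a \notin S$ and $b \in S$, then $|N(b) \cap S| \le 1$; (iii) if $a \in S$ and $b \notin S$, then $|(N(b)\cap S)\setminus\{a\}| = 1$; (iv) if $a, b \in S$, then $|(N(b)\cap S)\setminus\{a\}| = 0$.
   Context: $N(b)$ is the set of neighbors of $b$. Distances are graph distances in $T$. A fort of a graph $G$ is a nonempty set $F\subseteq V(G)$ such that every vertex outside $F$ is adjacent to either zero or at least two vertices of $F$; it is minimal if no proper subset is a fort. *)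

(* Defs.v *)
(* A simple graph is a symmetric irreflexive relation e on a finType V. *)
From mathcomp Require Import all_boot.
Set Implicit Arguments. Unset Strict Implicit. Unset Printing Implicit Defensive.

Section Graphs.
Variables (V : finType) (e : rel V).

Definition nbhd (v : V) : {set V} := [set x | e v x].

Definition leaf (v : V) : bool := #|nbhd v| == 1.

Definition connected_graph : Prop := forall x y : V, connect e x y.

Definition acyclic : Prop :=
  forall c : seq V, uniq c -> 3 <= size c -> ~~ cycle e c.

Definition is_tree : Prop := connected_graph /\ acyclic.

Definition walk_len (x y : V) (n : nat) : bool :=
  [exists p : n.-tuple V, path e x p && (last x p == y)].

(* graph distance: least n with a walk of length n (any shortest walk has
   length < #|V|); equals #|V| if y is unreachable from x. *)
Definition dist (x y : V) : nat := find (walk_len x y) (iota 0 #|V|).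

Definition fort (F : {set V}) : Prop :=
  F != set0 /\ forall v, v \notin F -> #|nbhd v :&: F| != 1.

Definition minimal_fort (F : {set V}) : Prop :=
  fort F /\ forall F' : {set V}, F' \proper F -> ~ fort F'.

End Graphs.

(* Main.v *)
Require Import Defs.
From mathcomp Require Import all_boot.
Set Implicit Arguments. Unset Strict Implicit. Unset Printing Implicit Defensive.

Section Tree.
Variables (V : finType) (e : rel V).
Hypotheses (e_sym : symmetric e) (e_irr : irreflexive e)
  (conn : connected_graph e) (acyc : acyclic e).

Definition er (a : V) : rel V := [rel u v | [&& e u v, u != a & v != a]].
Definition side (a b : V) : {set V} := [set x | connect (er a) b x].

Lemma neq_e x y : e x y -> x != y.
Proof. by move=> h; apply/eqP=> xy; rewrite xy e_irr in h. Qed.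

Lemma closure_ind (r : rel V) (P : V -> Prop) b : P b ->
  (forall x y, connect r b x -> P x -> r x y -> P y) ->
  forall x, connect r b x -> P x.
Proof.
move=> Pb step x /connectP [p pp ->].
elim/last_ind: p pp => [//| p y IH]; rewrite rcons_path last_rcons => /andP[pp ry].
apply: step ry; last exact: IH.
by apply/connectP; exists p.
Qed.

Lemma connect_er_to a u : connect (er a) u a -> u = a.
Proof.
move/connectP=> [p pp].
elim/last_ind: p pp => [_ -> //|p y _]; rewrite rcons_path last_rcons.
by move=> /andP[_ /and3P[_ _ ya]] ya'; rewrite ya' eqxx in ya.
Qed.

Lemma a_notin_side a b : a != b -> a \notin side a b.
Proof.
move=> ab; rewrite inE; apply/negP=> /connect_er_to ba.
by rewrite ba eqxx in ab.
Qed.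

Lemma b_in_side a b : b \in side a b.
Proof. by rewrite inE connect0. Qed.

Lemma path_er_all a x p : path (er a) x p -> all (fun y => y != a) p.
Proof.
elim: p x => //= y p IH x /andP[/and3P[_ _ ya] pp]; rewrite ya /=; exact: IH pp.
Qed.

Lemma side_adj a b x : e a b -> x \in side a b -> e x a -> x = b.
Proof.
move=> eab; rewrite inE => /connectP [p pp ->] exa; move: exa.
case: (shortenP pp) => p' pp' up' _ {pp}.
case: p' pp' up' => [//|c q] pp' up' exa; exfalso.
suff [u cy] : uniq [:: a, b, c & q] /\ cycle e [:: a, b, c & q].
  by move/negP: (acyc u (isT : 3 <= size [:: a, b, c & q])).
split.
- rewrite cons_uniq up' andbT.
  have := path_er_all pp'; rewrite /= => /andP[ca aq].
  rewrite !inE !negb_or (neq_e eab) eq_sym ca /=.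
  by apply/negP=> /(allP aq); rewrite eqxx.
- rewrite /cycle rcons_path /= eab exa andbT.
  by apply: sub_path pp' => u v /and3P[].
Qed.

Lemma side_exit a b x y : e a b -> x \in side a b -> y \notin side a b ->
  e x y -> x = b /\ y = a.
Proof.
move=> eab xs ys exy.
have xa : x != a by apply: contraTneq xs => ->; apply: a_notin_side; exact: neq_e.
have ya : y = a.
  apply/eqP; apply: contraNT ys => ya; rewrite inE.
  rewrite inE in xs; apply: connect_trans xs (connect1 _).
  by rewrite /er /= exy xa ya.
subst y; split => //; exact: side_adj eab xs exy.
Qed.

Lemma side_sub a b c : e a b -> e b c -> c != a -> {subset side b c <= side a b}.
Proof.
move=> eab ebc ca x; rewrite inE; move: x.
apply: closure_ind.
  rewrite inE; apply: connect1; rewrite /er /= ebc ca andbT.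
  by rewrite eq_sym neq_e.
move=> x y cx xs /and3P[exy _ _].
have xa : x != a by apply: contraTneq xs => ->; apply: a_notin_side; exact: neq_e.
have [ya|ya] := eqVneq y a.
  subst y; have: a \in side b c.
    have xb : x != b.
      by apply: contraTneq cx => ->; move: (a_notin_side (neq_e ebc)); rewrite inE.
    by rewrite inE; apply: connect_trans cx (connect1 _); rewrite /er /= exy (neq_e eab) xb.
  move/side_adj => /(_ ebc) /(_ eab) ac.
  by rewrite ac eqxx in ca.
rewrite inE in xs; rewrite /= inE; apply: connect_trans xs (connect1 _); by rewrite /er /= exy xa ya.
Qed.

Lemma side_decomp a b x : e a b -> x \in side a b ->
  x = b \/ exists2 c, e b c /\ c != a & x \in side b c.
Proof.
move=> eab; rewrite inE; move: x; apply: closure_ind; first by left.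
move=> x y _ [->|[c [ebc ca] xs]] /and3P[exy xa ya].
  by right; exists y => //; exact: b_in_side.
have [yb|yb] := eqVneq y b; first by left.
right; exists c => //.
have xb : x != b by apply: contraTneq xs => ->; apply: a_notin_side; rewrite neq_e.
rewrite inE in xs; rewrite /= inE; apply: connect_trans xs (connect1 _); by rewrite /er /= exy xb yb.
Qed.


Lemma walk_lenP x y n :
  reflect (exists p, [/\ size p = n, path e x p & last x p = y]) (walk_len e x y n).
Proof.
apply: (iffP existsP) => [[p /andP[pp /eqP <-]]|[p [<- pp <-]]].
  by exists (val p); rewrite size_tuple.
by exists (in_tuple p); rewrite pp eqxx.
Qed.

Lemma dist_le x y n : walk_len e x y n -> dist e x y <= n.
Proof.
move=> w; rewrite leqNgt; apply/negP => lt.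
have nlt : n < #|V| by apply: leq_trans lt _; rewrite -[X in _ <= X](size_iota 0) find_size.
by have := before_find 0 lt; rewrite nth_iota // add0n w.
Qed.

Lemma dist_walk x y : walk_len e x y (dist e x y).
Proof.
have /connectP [p pp ->] := conn x y.
case: (shortenP pp) => p' pp' up' _.
have sz : size p' < #|V|.
  rewrite cardT; have := uniq_leq_size up' (s2 := enum V).
  by apply => z _; rewrite mem_enum.
have hw : has (walk_len e x (last x p')) (iota 0 #|V|).
  by apply/hasP; exists (size p'); [rewrite mem_iota | apply/walk_lenP; exists p'].
have := nth_find 0 hw; rewrite nth_iota ?add0n //.
by rewrite has_find size_iota in hw.
Qed.

Lemma parent l v : v != l -> exists2 a, e a v & dist e l a < dist e l v.
Proof.
move=> vl; move/walk_lenP: (dist_walk l v) => [p [sz pp lp]].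
case/lastP: p sz pp lp => [|q y] sz.
  by move=> _ /= lv; rewrite lv eqxx in vl.
rewrite rcons_path last_rcons => /andP[pq ey] yv; subst y.
exists (last l q) => //.
apply: leq_ltn_trans (dist_le (n := size q) _) _.
  by apply/walk_lenP; exists q.
by rewrite -sz size_rcons ltnSn.
Qed.

Lemma exit_walk (P : pred V) x p : path e x p -> P x -> ~~ P (last x p) ->
  exists q v, [/\ size q < size p, path e x q, P (last x q), ~~ P v & e (last x q) v].
Proof.
elim: p x => [|y p IH] x /=; first by move=> _ ->.
move=> /andP[exy pp] Px Pl.
have [Py|Py] := boolP (P y).
  have [q [v [sq pq Pq Pv eq]]] := IH y pp Py Pl.
  by exists (y :: q), v; split => //=; rewrite exy.
by exists [::], y; split.
Qed.

Lemma not_in_side l a b : e a b -> dist e l a < dist e l b -> l \notin side a b.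
Proof.
move=> eab lt; apply/negP => ls.
move/walk_lenP: (dist_walk l a) => [p [sz pp lp]].
have := exit_walk (P := mem (side a b)) pp ls.
rewrite lp a_notin_side ?neq_e // => /(_ isT) [q [v [sq pq Pq Pv eq]]].
have [ub _] := side_exit eab Pq Pv eq.
have : dist e l b <= size q by apply: dist_le; apply/walk_lenP; exists q.
by move=> h; have := leq_ltn_trans h sq; rewrite sz ltnNge (ltnW lt).
Qed.


Lemma le1 S b : minimal_fort e S -> b \in S -> #|nbhd e b :&: S| <= 1.
Proof.
move=> [[S0 fS] minS] bS; rewrite leqNgt; apply/negP => h2.
pose F := [set x in S | [exists c, [&& c \in S, e b c & x \in side b c]]].
apply: (minS F).
  rewrite properE; apply/andP; split.
    by apply/subsetP => x; rewrite inE => /andP[].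
  apply/negP => /subsetP /(_ b bS); rewrite inE => /andP[_ /existsP[c /and3P[_ ebc bs]]].
  by rewrite (negbTE (a_notin_side (neq_e ebc))) in bs.
split.
  have /card_gt0P [c] : 0 < #|nbhd e b :&: S| by apply: leq_trans h2.
  rewrite !inE => /andP[ebc cS]; apply/set0Pn; exists c.
  rewrite inE cS /=; apply/existsP; exists c; by rewrite cS ebc b_in_side.
move=> v vF.
have [vb|vb] := eqVneq v b.
  subst v; apply: contraTneq h2 => h1; rewrite -ltnNge ltnS -h1.
  apply: subset_leq_card; apply/subsetP => c; rewrite !inE => /andP[ebc cS].
  rewrite ebc cS /=; apply/existsP; exists c; by rewrite cS ebc b_in_side.
case: (boolP [exists c, [&& c \in S, e b c & v \in side b c]]) =>
   [/existsP [c /and3P[cS ebc vs]] | nc].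
  have vS : v \notin S.
    apply: contra vF => vS; rewrite inE vS /=; apply/existsP; exists c.
    by rewrite cS ebc vs.
  suff -> : nbhd e v :&: F = nbhd e v :&: S by apply: fS.
  apply/setP => y; rewrite !inE; apply: andb_id2l => evy.
  apply/idP/idP => [/andP[] //|yS]; rewrite yS /=.
  apply/existsP; exists c; rewrite cS ebc /=.
  apply/negPn/negP => ys.
  have [vc _] := side_exit ebc vs ys evy.
  by rewrite vc cS in vS.
suff -> : nbhd e v :&: F = set0 by rewrite cards0.
apply/setP => y; rewrite !inE; apply/negP => /andP[evy /andP[yS /existsP [c /and3P[cS ebc ys]]]].
have vs : v \notin side b c.
  by apply: contra nc => vs; apply/existsP; exists c; rewrite cS ebc.
have eyv : e y v by rewrite e_sym.
have [_ vb'] := side_exit ebc ys vs eyv.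
by rewrite vb' eqxx in vb.
Qed.



Lemma subtree S a b s l : minimal_fort e S -> e a b -> b \notin S ->
  #|(nbhd e b :&: S) :\ a| != 1 -> s \in S -> s \in side a b ->
  l \in S -> l \notin side a b -> False.
Proof.
move=> [[S0 fS] minS] eab bS hb sS ss lS ls.
apply: (minS (S :&: side a b)).
  rewrite properE subsetIl /=; apply/negP => /subsetP /(_ l lS).
  by rewrite inE lS (negbTE ls).
split; first by apply/set0Pn; exists s; rewrite inE sS ss.
move=> v; rewrite inE negb_and => vF.
have [vs|vs] := boolP (v \in side a b).
  have vS : v \notin S by move: vF; rewrite vs orbF.
  have [vb|vb] := eqVneq v b.
    subst v; suff -> : nbhd e b :&: (S :&: side a b) = (nbhd e b :&: S) :\ a by [].
    apply/setP => y; rewrite !inE; apply/idP/idP.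
      move=> /and3P[eby yS ys]; rewrite eby yS !andbT.
      by apply: contraTneq ys => ->; move: (a_notin_side (neq_e eab)); rewrite inE.
    move=> /and3P[ya eby yS]; rewrite eby yS /=.
    by apply: connect1; rewrite /er /= eby ya (eq_sym b a) (neq_e eab).
  suff -> : nbhd e v :&: (S :&: side a b) = nbhd e v :&: S by apply: fS.
  apply/setP => y; rewrite !inE; apply: andb_id2l => evy.
  apply/idP/idP => [/andP[] //|yS]; rewrite yS /=.
  apply/negPn/negP => ys.
  have ys' : y \notin side a b by rewrite inE.
  have [vb' _] := side_exit eab vs ys' evy.
  by rewrite vb' eqxx in vb.
suff -> : nbhd e v :&: (S :&: side a b) = set0 by rewrite cards0.
apply/setP => y; rewrite !inE; apply/negP => /and3P[evy yS ys].
have eyv : e y v by rewrite e_sym.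
have ys' : y \in side a b by rewrite inE.
have [yb _] := side_exit eab ys' vs eyv.
by move: yS; rewrite yb => yS; rewrite yS in bS.
Qed.

Lemma has_leaf S : 2 <= #|V| -> fort e S -> exists2 l, l \in S & leaf e l.
Proof.
move=> V2 [S0 fS].
suff main : forall n a b, e a b -> #|side a b| <= n ->
    (exists2 s, s \in S & s \in side a b) -> exists2 l, l \in S & leaf e l.
  have [x0 x0S] := set0Pn _ S0.
  have [z zx] : exists z, z != x0.
    apply/existsP; move: V2; apply: contraLR; rewrite negb_exists => /forallP h.
    rewrite -leqNgt; apply: (@leq_trans #|[set x0]|); last by rewrite cards1.
    apply: subset_leq_card; apply/subsetP => y _; rewrite inE; exact/negPn/h.
  have /connectP [[|y p] pp zl] := conn x0 z; first by rewrite zl eqxx in zx.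
  move: pp => /= /andP[exy _].
  have eyx : e y x0 by rewrite e_sym.
  apply: (main _ _ _ eyx (leqnn _)); exists x0 => //; exact: b_in_side.
elim=> [|n IH] a b eab.
  by rewrite leqn0 => /eqP/cards0_eq sab [s _]; rewrite sab inE.
move=> szab [s sS ss].
case: (boolP [exists c, [&& e b c, c != a & [exists s, (s \in S) && (s \in side b c)]]]).
  move=> /existsP [c /and3P[ebc ca /existsP [s' /andP[s'S s's]]]].
  apply: (IH b c ebc); last by exists s'.
  rewrite -ltnS; apply: leq_trans szab; apply: proper_card.
  rewrite properE; apply/andP; split.
    by apply/subsetP; exact: side_sub.
  apply/negP => /subsetP /(_ b (b_in_side a b)).
  by rewrite (negbTE (a_notin_side (neq_e ebc))).
rewrite negb_exists => /forallP nc.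
have bS : b \in S.
  case: (side_decomp eab ss) => [<- //|[c [ebc ca] sc]].
  move: (nc c); rewrite ebc ca /= => /negP; case.
  by apply/existsP; exists s; rewrite sS.
have [lb|nlb] := boolP (leaf e b); first by exists b.
have [c ebc ca] : exists2 c, e b c & c != a.
  apply/exists_inP; move: nlb; apply: contraR; rewrite negb_exists_in => /forall_inP h.
  apply/eqP; rewrite -(cards1 a); apply: eq_card => y; rewrite !inE.
  apply/idP/idP => [eby|/eqP ->]; last by rewrite e_sym.
  exact/negPn/h.
exfalso.
have cs : forall y, y \in S -> y \notin side b c.
  move=> y yS; apply/negP => ys; move: (nc c); rewrite ebc ca /= => /negP; case.
  by apply/existsP; exists y; rewrite yS.
have cS : c \notin S by apply: contraNN (cs c) _; rewrite b_in_side.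
suff : #|nbhd e c :&: S| == 1 by move/negP: (fS c cS).
apply/eqP; rewrite -(cards1 b); apply: eq_card => y; rewrite !inE.
apply/idP/idP => [/andP[ecy yS]|/eqP ->]; last by rewrite e_sym ebc bS.
apply/negPn/negP => yb; move: (cs y yS); rewrite inE => /negP; apply.
by apply: connect1; rewrite /er /= ecy yb eq_sym (neq_e ebc).
Qed.


Lemma nbS_D1 (S : {set V}) b a : a \notin S -> (nbhd e b :&: S) :\ a = nbhd e b :&: S.
Proof.
move=> aS; apply/setP => z; rewrite !inE; case: eqVneq => // ->.
by rewrite (negbTE aS) andbF.
Qed.

Lemma forward (S : {set V}) : 2 <= #|V| -> minimal_fort e S ->
  ((exists2 l, l \in S & leaf e l) /\
   (forall l, l \in S -> leaf e l ->
    forall a b, e a b -> dist e l a < dist e l b ->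
      [/\ (a \notin S -> b \notin S -> nbhd e b :&: S = set0),
          (a \notin S -> b \in S -> #|nbhd e b :&: S| <= 1),
          (a \in S -> b \notin S -> #|(nbhd e b :&: S) :\ a| = 1) &
          (a \in S -> b \in S -> #|(nbhd e b :&: S) :\ a| = 0)])).
Proof.
move=> V2 mS; have [[S0 fS] minS] := mS.
split; first exact: has_leaf V2 (conj S0 fS).
move=> l lS ll a b eab lt; have ls := not_in_side eab lt.
have ba : b != a by rewrite eq_sym neq_e.
split.
- move=> aS bS; apply/setP => y; rewrite !inE; apply/negP => /andP[eby yS].
  apply: (subtree mS eab bS _ yS _ lS ls).
    by rewrite nbS_D1 //; exact: fS.
  rewrite inE; apply: connect1; rewrite /er /= eby ba /=.
  by apply: contraTneq yS => ->.
- by move=> _ bS; exact: le1 mS bS.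
- move=> aS bS.
  have ain : a \in nbhd e b :&: S by rewrite !inE aS andbT e_sym.
  have := fS b bS; rewrite (cardsD1 a) ain add1n eqSS => k0.
  apply/eqP; apply: contraT => k1; exfalso.
  have /card_gt0P [y] : 0 < #|(nbhd e b :&: S) :\ a| by rewrite lt0n.
  rewrite !inE => /and3P[ya eby yS].
  apply: (subtree mS eab bS k1 yS _ lS ls).
  by rewrite inE; apply: connect1; rewrite /er /= eby ba ya.
- move=> aS bS.
  have ain : a \in nbhd e b :&: S by rewrite !inE aS andbT e_sym.
  have := le1 mS bS; rewrite (cardsD1 a) ain add1n ltnS leqn0.
  by move/eqP.
Qed.

Lemma backward (S : {set V}) :
  ((exists2 l, l \in S & leaf e l) /\
   (forall l, l \in S -> leaf e l ->
    forall a b, e a b -> dist e l a < dist e l b ->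
      [/\ (a \notin S -> b \notin S -> nbhd e b :&: S = set0),
          (a \notin S -> b \in S -> #|nbhd e b :&: S| <= 1),
          (a \in S -> b \notin S -> #|(nbhd e b :&: S) :\ a| = 1) &
          (a \in S -> b \in S -> #|(nbhd e b :&: S) :\ a| = 0)])) ->
  minimal_fort e S.
Proof.
move=> [[l lS ll] H].
have S0 : S != set0 by apply/set0Pn; exists l.
have le1' : forall y, y \in S -> #|nbhd e y :&: S| <= 1.
  move=> y yS; have [yl|yl] := eqVneq y l.
    subst y; move/eqP: ll => <-; apply: subset_leq_card; exact: subsetIl.
  have [a eay lt] := parent yl.
  have [_ ii _ iv] := H l lS ll a y eay lt.
  have [aS|aS] := boolP (a \in S); last exact: ii.
  have ain : a \in nbhd e y :&: S by rewrite !inE aS andbT e_sym.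
  by rewrite (cardsD1 a) ain (iv aS yS).
have fS : fort e S.
  split => // v vS.
  have vl : v != l by apply: contraNneq vS => ->.
  have [a eav lt] := parent vl.
  have [i _ iii _] := H l lS ll a v eav lt.
  have [aS|aS] := boolP (a \in S).
    have ain : a \in nbhd e v :&: S by rewrite !inE aS andbT e_sym.
    by rewrite (cardsD1 a) ain (iii aS vS).
  by rewrite (i aS vS) cards0.
split => // F pF [F0 fF].
have FS : F \subset S by move/properP: pF => [].
have step : forall x y, y \in S -> e x y -> x \in F -> y \in F.
  move=> x y yS exy xF; apply/negPn/negP => yF.
  move: (fF y yF); apply/negP/negPn/eqP; apply/eqP; rewrite eqn_leq; apply/andP; split.
    apply: leq_trans (le1' y yS); apply: subset_leq_card; apply: setIS FS.
  by apply/card_gt0P; exists x; rewrite !inE xF andbT e_sym.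
have adj : forall x y, x \in S -> y \in S -> e x y -> (x \in F) = (y \in F).
  move=> x y xS yS exy; apply/idP/idP; first exact: step.
  by apply: step; rewrite // e_sym.
have via : forall a x y, a \notin S -> nbhd e a :&: S = [set x; y] ->
    x \in F -> y \in F.
  move=> a x y aS nA xF; apply/negPn/negP => yF.
  have aF : a \notin F by apply: contra aS; apply: (subsetP FS).
  move: (fF a aF); apply/negP/negPn; apply/cards1P; exists x.
  apply/setP => z; rewrite !inE; apply/idP/idP.
    move=> /andP[eaz zF].
    have : z \in nbhd e a :&: S by rewrite !inE eaz (subsetP FS).
    rewrite nA !inE => /orP[//|/eqP zy]; by move: zF; rewrite zy (negbTE yF).
  move/eqP => ->; rewrite xF andbT.
  have : x \in nbhd e a :&: S by rewrite nA !inE eqxx.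
  by rewrite !inE => /andP[].
have main : forall n b, dist e l b <= n -> b \in S -> (b \in F) = (l \in F).
  elim=> [|n IH] b db bS; have [bl|bl] := eqVneq b l; try by rewrite bl.
    by have [a _ lt] := parent bl; move: (leq_trans lt db).
  have [a eab lt] := parent bl.
  have da : dist e l a <= n by rewrite -ltnS (leq_trans lt db).
  have [aS|aS] := boolP (a \in S).
    by rewrite -(adj a b aS bS eab) (IH a da aS).
  have al : a != l by apply: contraNneq aS => ->.
  have [p epa ltp] := parent al.
  have [i _ iii _] := H l lS ll p a epa ltp.
  have [pS|pS] := boolP (p \in S); last first.
    have := i pS aS; move/setP => /(_ b); rewrite !inE eab bS.
    by [].
  have pb : p != b.
    by apply: contraTneq ltp => ->; rewrite -leqNgt ltnW.
  have /eqP/cards1P [x hx] := iii pS aS.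
  have bx : b = x.
    have : b \in (nbhd e a :&: S) :\ p by rewrite !inE eab bS eq_sym pb.
    by rewrite hx inE => /eqP.
  subst x.
  have nA : nbhd e a :&: S = [set p; b].
    apply/setP => z; rewrite !inE.
    have [zp|zp] := eqVneq z p.
      by rewrite zp pS e_sym epa.
    move/setP: hx => /(_ z); rewrite !inE zp /= => ->.
    by [].
  have dp : dist e l p <= n by rewrite -ltnS (leq_trans (ltn_trans ltp lt) db).
  rewrite -(IH p dp pS).
  apply/idP/idP.
    apply: via aS _; by rewrite setUC.
  exact: via aS nA.
have [x xF] := set0Pn _ F0.
move/properP: pF => [_ [b bS bF]].
have xS : x \in S := subsetP FS x xF.
have lF : l \in F by rewrite -(main _ x (leqnn _) xS).
by move: bF; rewrite (main _ b (leqnn _) bS) lF.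
Qed.

End Tree.

Theorem mainTheorem8 (V : finType) (e : rel V)
  (e_sym : symmetric e) (e_irr : irreflexive e)
  (tree : is_tree e) (size3 : 3 <= #|V|) (S : {set V}) :
  minimal_fort e S <->
  ((exists2 l, l \in S & leaf e l) /\
   (forall l, l \in S -> leaf e l ->
    forall a b, e a b -> dist e l a < dist e l b ->
      [/\ (a \notin S -> b \notin S -> nbhd e b :&: S = set0),
          (a \notin S -> b \in S -> #|nbhd e b :&: S| <= 1),
          (a \in S -> b \notin S -> #|(nbhd e b :&: S) :\ a| = 1) &
          (a \in S -> b \in S -> #|(nbhd e b :&: S) :\ a| = 0)])).
Proof.
case: tree => conn acyc; split.
  exact: (forward e_sym e_irr conn acyc (ltnW size3)).
exact: (@backward V e e_sym conn S).
Qed.
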